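(* Let $D$ be a connected locally semicomplete digraph in which no inclusion-wise maximal weak hub is mixed. If $X$ and $Y$ are two distinct inclusion-wise maximal weak hubs of $D$, then $X\cap Y=\emptyset$.
   Context: Digraphs are finite, no loops, no parallel arcs; digons allowed. $x^+$, $x^-$ are out- and in-neighbourhoods. A digraph is semicomplete if any two distinct vertices are joined by at least one arc; locally semicomplete if every $x^+$ and every $x^-$ induces a semicomplete digraph. A weak hub is a set $X\subseteq V(D)$ with $D[X]$ strongly connected such that some vertex $x$ satisfies $X\subseteq x^-\setminus x^+$ or $X\subseteq x^+\setminus x^-$. A weak hub $X$ is mixed if there exist $x\notin X$ and $u,v\in X$ such that $xu$ and $vx$ are arcs. *)

(* Defs.v *)
From mathcomp Require Import all_boot.
Set Implicit Arguments. Unset Strict Implicit. Unset Printing Implicit Defensive.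

(* A digraph on a finite vertex type T is a boolean arc relation [arc];
   "no loops" is [irreflexive arc]; parallel arcs cannot occur; digons
   (arc u v && arc v u) are allowed. *)

Section Digraphs.
Variables (T : finType) (arc : rel T).

Definition outN (x : T) : {set T} := [set y | arc x y].
Definition inN (x : T) : {set T} := [set y | arc y x].

Definition semicomplete_on (S : {set T}) : Prop :=
  forall u v, u \in S -> v \in S -> u != v -> arc u v || arc v u.

Definition locally_semicomplete : Prop :=
  forall x, semicomplete_on (outN x) /\ semicomplete_on (inN x).

Definition connected_digraph : Prop :=
  forall x y, connect (fun a b => arc a b || arc b a) x y.

Definition strong_on (X : {set T}) : Prop :=
  X != set0 /\
  forall u v, u \in X -> v \in X ->
    connect (fun a b => [&& arc a b, a \in X & b \in X]) u v.

Definition weak_hub (X : {set T}) : Prop :=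
  strong_on X /\
  exists x, X \subset inN x :\: outN x \/ X \subset outN x :\: inN x.

Definition max_weak_hub (X : {set T}) : Prop :=
  weak_hub X /\ forall Y, weak_hub Y -> X \subset Y -> Y = X.

Definition mixed (X : {set T}) : Prop :=
  exists x u v, [/\ x \notin X, u \in X, v \in X, arc x u & arc v x].

End Digraphs.

(* Main.v *)
Require Import Defs.
From mathcomp Require Import all_boot.
Set Implicit Arguments. Unset Strict Implicit. Unset Printing Implicit Defensive.

Lemma exit_arc (T : finType) (e : rel T) (S : pred T) x y :
  connect e x y -> S x -> ~~ S y -> exists u w, [/\ e u w, S u & ~~ S w].
Proof.
move=> /connectP [p]; elim: p x => [|z p IH] x /=.
  by move=> _ -> ->.
move=> /andP [exz pz] ly Sx nSy.
case Sz: (S z).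
  exact: IH pz ly Sz nSy.
by exists x, z; rewrite exz Sx Sz.
Qed.

Lemma strong_union (T : finType) (arc : rel T) (X Y : {set T}) c :
  strong_on arc X -> strong_on arc Y -> c \in X -> c \in Y ->
  strong_on arc (X :|: Y).
Proof.
move=> [_ sX] [_ sY] cX cY; split.
  by apply/set0Pn; exists c; rewrite in_setU cX.
pose e := fun a b => [&& arc a b, a \in X :|: Y & b \in X :|: Y].
have liftX : forall u v, connect (fun a b => [&& arc a b, a \in X & b \in X]) u v ->
  connect e u v.
  apply: connect_sub => a b /and3P [ab aX bX]; apply: connect1.
  by rewrite /e ab !in_setU aX bX.
have liftY : forall u v, connect (fun a b => [&& arc a b, a \in Y & b \in Y]) u v ->
  connect e u v.
  apply: connect_sub => a b /and3P [ab aX bX]; apply: connect1.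
  by rewrite /e ab !in_setU aX bX !orbT.
have toc : forall u, u \in X :|: Y -> connect e u c.
  by move=> u; rewrite in_setU => /orP [uX|uY]; [apply: liftX; apply: sX|apply: liftY; apply: sY].
have fromc : forall u, u \in X :|: Y -> connect e c u.
  by move=> u; rewrite in_setU => /orP [uX|uY]; [apply: liftX; apply: sX|apply: liftY; apply: sY].
move=> u v uXY vXY; exact: connect_trans (toc u uXY) (fromc v vXY).
Qed.

Theorem claim4p4 (T : finType) (arc : rel T) :
  irreflexive arc ->
  connected_digraph arc ->
  locally_semicomplete arc ->
  (forall X, max_weak_hub arc X -> ~ mixed arc X) ->
  forall X Y : {set T}, max_weak_hub arc X -> max_weak_hub arc Y -> X != Y ->
  X :&: Y = set0.
Proof.
move=> irr _ lsc nmix X Y mX mY neXY.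
apply/eqP/negPn/negP => /set0Pn [c]; rewrite in_setI => /andP [cX cY].
have nmX : forall w u v, w \notin X -> u \in X -> v \in X -> arc w u -> arc v w -> False.
  by move=> w u v wX uX vX wu vw; apply: (nmix X mX); exists w, u, v.
have [wX maxX] := mX; have [[sY [y hy]] maxY] := mY.
have [sX _] := wX.
have [b bY bX] : exists2 b, b \in Y & b \notin X.
  case: (boolP [exists z in Y, z \notin X]) => [/exists_inP //|nH].
  have H : forall z, z \in Y -> ~~ (z \notin X) by move=> z zY; apply/negP => zn; move/negP: nH; apply; apply/exists_inP; exists z.
  exfalso; move/eqP: neXY; apply; apply: (maxY X wX).
  apply/subsetP => z zY; move: (H z zY); by rewrite negbK.
have fin : forall z, X :|: Y \subset inN arc z :\: outN arc z \/
                       X :|: Y \subset outN arc z :\: inN arc z -> False.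
  move=> z hz.
  have : weak_hub arc (X :|: Y) by split; [exact: strong_union sX sY cX cY | exists z].
  move=> /maxY /(_ (subsetUr X Y)) eq.
  move/eqP: neXY; apply; symmetry; apply: (maxX Y mY.1).
  by rewrite -eq subsetUl.
have [sY0 sYc] := sY; have [sX0 sXc] := sX.
case: hy => /subsetP hy.
- have hyv : forall v, v \in Y -> arc v y && ~~ arc y v.
    by move=> v /hy; rewrite !inE => /andP [-> ->].
  case yX: (y \in X).
  + have [u [w [/and3P [uw uY wY] uX wnX]]] :=
      exit_arc (S := fun z => z \in X) (sYc c b cY bY) cX bX.
    by apply: (nmX w y u wnX yX uX _ uw); case/andP: (hyv w wY).
  + have cy : arc c y by case/andP: (hyv c cY).
    have noin : forall u, u \in X -> ~~ arc y u.
      by move=> u uX; apply/negP => yu; apply: (nmX y u c); rewrite ?yX.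
    have allX : forall v, v \in X -> arc v y.
      move=> v vX; apply/negPn/negP => nvy.
      have [u [w [/and3P [uw uX' wX'] uy wy]]] :=
        exit_arc (S := fun z => arc z y) (sXc c v cX vX) cy nvy.
      have [H _] := lsc u.
      have : arc y w || arc w y.
        apply: H; rewrite ?inE //; apply/negP => /eqP ey; by rewrite ey wX' in yX.
      by rewrite (negbTE wy) orbF (negbTE (noin w wX')).
    apply: (fin y); left; apply/subsetP => z; rewrite in_setU !inE => /orP [zX|zY].
    * by rewrite allX // noin.
    * by move: (hyv z zY) => /andP [-> ->].
- have hyv : forall v, v \in Y -> arc y v && ~~ arc v y.
    by move=> v /hy; rewrite !inE => /andP [-> ->].
  case yX: (y \in X).
  + have [u [w [/and3P [uw uY wY] unX wX']]] :=
      exit_arc (S := fun z => z \notin X) (sYc b c bY cY) bX (ltac:(by rewrite /= cX)).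
    by apply: (nmX u w y unX (negbNE wX') yX uw); case/andP: (hyv u uY).
  + have yc : arc y c by case/andP: (hyv c cY).
    have noout : forall u, u \in X -> ~~ arc u y.
      by move=> u uX; apply/negP => uy; apply: (nmX y c u); rewrite ?yX.
    have allX : forall v, v \in X -> arc y v.
      move=> v vX; apply/negPn/negP => nyv.
      have [u [w [/and3P [uw uX' wX'] yu yw]]] :=
        exit_arc (S := fun z => ~~ arc y z) (sXc v c vX cX) nyv (ltac:(by rewrite /= yc)).
      have [_ H] := lsc w.
      have : arc u y || arc y u.
        apply: H; rewrite ?inE ?(negbNE yw) //; apply/negP => /eqP ey; by rewrite ey yX in uX'.
      by rewrite (negbTE yu) orbF (negbTE (noout u uX')).
    apply: (fin y); right; apply/subsetP => z; rewrite in_setU !inE => /orP [zX|zY].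
    * by rewrite allX // noout.
    * by move: (hyv z zY) => /andP [-> ->].
Qed.
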